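(* Let $A_1,\dots,A_m\in\mathbb{S}^n$, $b\in\mathbb{R}^m$, $C\in\mathbb{S}^n$. Assume $\mathcal{C}$ is compact and Assumption 1 holds for $p=n+1$. Let $R=\max_{X\in\mathcal{C}}\operatorname{tr}(X)$ and $f^\star$ the optimal value of (SDP). If $Y\in\mathcal{M}_{n+1}$ satisfies $\|\operatorname{grad}g(Y)\|\le\varepsilon_g$ and $\operatorname{Hess}g(Y)\succeq-\varepsilon_H\operatorname{Id}$, then $0\le 2(g(Y)-f^\star)\le\varepsilon_g\sqrt{R}+\varepsilon_H R$. If moreover all $X\in\mathcal{C}$ have the same trace and there exists a positive definite $X\in\mathcal{C}$, then $0\le 2(g(Y)-f^\star)\le\varepsilon_H R$.
   Context: $\mathbb{S}^n$: real symmetric $n\times n$ matrices; $\langle U,V\rangle=\operatorname{tr}(U^\top V)$, $\|\cdot\|$ the Frobenius norm. $\mathcal{A}(X)_i=\langle A_i,X\rangle$, $\mathcal{A}^*(\nu)=\sum_i\nu_iA_i$. $\mathcal{C}=\{X\in\mathbb{S}^n:\mathcal{A}(X)=b,\ X\succeq0\}$ (non-empty); (SDP): minimize $\langle C,X\rangle$ over $\mathcal{C}$. $\mathcal{M}_p=\{Y\in\mathbb{R}^{n\times p}:\mathcal{A}(YY^\top)=b\}$, $g(Y)=\langle CY,Y\rangle$. Assumption 1 (for $p$): either (a) $A_1Y,\dots,A_mY$ are linearly independent for all $Y\in\mathcal{M}_p$, or (b) $\operatorname{span}\{A_1Y,\dots,A_mY\}$ has constant dimension on an open neighborhood of $\mathcal{M}_p$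 in $\mathbb{R}^{n\times p}$. For $Y\in\mathcal{M}_p$: $T_Y=\{\dot Y:\langle A_iY,\dot Y\rangle=0\ \forall i\}$, $P_Y$ the orthogonal projection onto $T_Y$; $G_{ij}=\langle A_iY,A_jY\rangle$, $\mu=G^\dagger\mathcal{A}(CYY^\top)$, $S(Y)=C-\mathcal{A}^*(\mu)$. The Riemannian gradient is $\operatorname{grad}g(Y)=2S(Y)Y$ and the Riemannian Hessian is the operator $\operatorname{Hess}g(Y)[\dot Y]=2P_Y(S(Y)\dot Y)$ on $T_Y$; $\operatorname{Hess}g(Y)\succeq-\varepsilon_H\operatorname{Id}$ means $\langle\dot Y,\operatorname{Hess}g(Y)[\dot Y]\rangle\ge-\varepsilon_H\|\dot Y\|^2$ for all $\dot Y\in T_Y$. *)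

(* Defs.v *)
From HB Require Import structures.
From mathcomp Require Import all_boot all_order all_algebra.
From mathcomp Require Import all_classical all_reals all_analysis.
Set Implicit Arguments. Unset Strict Implicit. Unset Printing Implicit Defensive.
Import Order.TTheory GRing.Theory Num.Theory numFieldNormedType.Exports.
Local Open Scope classical_set_scope.
Local Open Scope ring_scope.

Section SDP.
Variable R : realType.

Definition frob (k l : nat) (U V : 'M[R]_(k, l)) : R := \tr (U^T *m V).
Definition fnorm (k l : nat) (U : 'M[R]_(k, l)) : R := Num.sqrt (frob U U).

Definition symmat (n : nat) (X : 'M[R]_n) : Prop := X^T = X.
Definition psd (n : nat) (X : 'M[R]_n) : Prop :=
  symmat X /\ forall v : 'cV[R]_n, 0 <= \tr (v^T *m X *m v).
Definition pd (n : nat) (X : 'M[R]_n) : Prop :=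
  symmat X /\ forall v : 'cV[R]_n, v != 0 -> 0 < \tr (v^T *m X *m v).

Variables (n m : nat) (A : 'I_m -> 'M[R]_n) (b : 'I_m -> R) (C : 'M[R]_n).

Definition Aop (X : 'M[R]_n) (i : 'I_m) : R := frob (A i) X.
Definition Aadj (nu : 'I_m -> R) : 'M[R]_n := \sum_i nu i *: A i.

Definition feas : set 'M[R]_n :=
  [set X | symmat X /\ (forall i, Aop X i = b i) /\ psd X].

Variable p : nat.

Definition Mp : set 'M[R]_(n, p) := [set Y | forall i, Aop (Y *m Y^T) i = b i].
Definition g (Y : 'M[R]_(n, p)) : R := frob (C *m Y) Y.

(* the matrix whose rows are vec(A_i Y); its rank = dim span{A_i Y} *)
Definition AYmx (Y : 'M[R]_(n, p)) : 'M[R]_(m, n * p) :=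
  \matrix_(i < m) mxvec (A i *m Y).

Definition assumption1 : Prop :=
  (forall Y, Mp Y -> row_free (AYmx Y))
  \/ (exists U : set 'M[R]_(n, p), open U /\ Mp `<=` U /\
        exists r : nat, forall Y, U Y -> \rank (AYmx Y) = r).

Definition TY (Y : 'M[R]_(n, p)) : set 'M[R]_(n, p) :=
  [set Yd | forall i, frob (A i *m Y) Yd = 0].

Definition PY (Y Z : 'M[R]_(n, p)) : 'M[R]_(n, p) :=
  xget 0 [set W | TY Y W /\ forall V, TY Y V -> frob (Z - W) V = 0].

Definition is_mp_pinv (k : nat) (G P : 'M[R]_k) : Prop :=
  G *m P *m G = G /\ P *m G *m P = P /\ (G *m P)^T = G *m P /\ (P *m G)^T = P *m G.
Definition mp_pinv (k : nat) (G : 'M[R]_k) : 'M[R]_k := xget 0 [set P | is_mp_pinv G P].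

Definition Gram (Y : 'M[R]_(n, p)) : 'M[R]_m :=
  \matrix_(i, j) frob (A i *m Y) (A j *m Y).
Definition mu (Y : 'M[R]_(n, p)) : 'cV[R]_m :=
  mp_pinv (Gram Y) *m \col_i Aop (C *m Y *m Y^T) i.
Definition Smat (Y : 'M[R]_(n, p)) : 'M[R]_n := C - Aadj (fun i => mu Y i 0).

Definition rgrad (Y : 'M[R]_(n, p)) : 'M[R]_(n, p) := 2%:R *: (Smat Y *m Y).
Definition rhess (Y Yd : 'M[R]_(n, p)) : 'M[R]_(n, p) := 2%:R *: PY Y (Smat Y *m Yd).

Definition hess_ge (Y : 'M[R]_(n, p)) (epsH : R) : Prop :=
  forall Yd, TY Y Yd -> - epsH * fnorm Yd ^+ 2 <= frob Yd (rhess Y Yd).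

End SDP.

(* Main.v *)
Require Import Defs.
From HB Require Import structures.
From mathcomp Require Import all_boot all_order all_algebra.
From mathcomp Require Import all_classical all_reals all_analysis.
From mathcomp Require Import ring lra.
Import Order.TTheory GRing.Theory Num.Theory numFieldNormedType.Exports.
Local Open Scope ring_scope.
Set Implicit Arguments. Unset Strict Implicit. Unset Printing Implicit Defensive.
Section Basics.
Variable R : realType.

Lemma disc (a b c : R) : 0 <= c -> (forall t, 0 <= a + 2%:R * t * b + t ^+ 2 * c) ->
  b ^+ 2 <= a * c.
Proof.
move=> c0 H; have a0 : 0 <= a by have := H 0; rewrite !(mul0r, mulr0, expr0n, addr0).
have [cgt|ceq] := boolP (0 < c).
  have := H (- b / c).
  have -> : a + 2%:R * (- b / c) * b + (- b / c) ^+ 2 * c = a - b ^+ 2 / c.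
    by field; rewrite gt_eqF.
  rewrite subr_ge0 ler_pdivrMr //.
have c0' : c = 0 by apply/eqP; rewrite eq_le c0 andbT leNgt.
subst c; rewrite mulr0.
have [b0|bn0] := eqVneq b 0; first by rewrite b0 expr0n.
have := H (- (a + 1) / (2%:R * b)).
have -> : a + 2%:R * (- (a + 1) / (2%:R * b)) * b + (- (a + 1) / (2%:R * b)) ^+ 2 * 0 = -1.
  by field; rewrite bn0.
by rewrite ler0N1.
Qed.

Lemma frobC k l (U V : 'M[R]_(k, l)) : frob U V = frob V U.
Proof. by rewrite /frob -mxtrace_tr trmx_mul trmxK. Qed.

Lemma frobDr k l (U V W : 'M[R]_(k, l)) : frob U (V + W) = frob U V + frob U W.
Proof. by rewrite /frob mulmxDr mxtraceD. Qed.

Lemma frobZr k l (U V : 'M[R]_(k, l)) a : frob U (a *: V) = a * frob U V.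
Proof. by rewrite /frob -scalemxAr mxtraceZ. Qed.

Lemma frobNr k l (U V : 'M[R]_(k, l)) : frob U (- V) = - frob U V.
Proof. by rewrite -scaleN1r frobZr mulN1r. Qed.

Lemma frobBr k l (U V W : 'M[R]_(k, l)) : frob U (V - W) = frob U V - frob U W.
Proof. by rewrite frobDr frobNr. Qed.

Lemma frob0r k l (U : 'M[R]_(k, l)) : frob U 0 = 0.
Proof. by rewrite /frob mulmx0 linear0. Qed.

Lemma frobDl k l (U V W : 'M[R]_(k, l)) : frob (V + W) U = frob V U + frob W U.
Proof. by rewrite frobC frobDr !(frobC U). Qed.

Lemma frobZl k l (U V : 'M[R]_(k, l)) a : frob (a *: V) U = a * frob V U.
Proof. by rewrite frobC frobZr frobC. Qed.

Lemma frobNl k l (U V : 'M[R]_(k, l)) : frob (- V) U = - frob V U.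
Proof. by rewrite frobC frobNr frobC. Qed.

Lemma frobBl k l (U V W : 'M[R]_(k, l)) : frob (V - W) U = frob V U - frob W U.
Proof. by rewrite frobDl frobNl. Qed.

Lemma frob0l k l (U : 'M[R]_(k, l)) : frob 0 U = 0.
Proof. by rewrite frobC frob0r. Qed.

Lemma frob_sumr k l (I : finType) (U : 'M[R]_(k, l)) (F : I -> 'M[R]_(k, l)) :
  frob U (\sum_i F i) = \sum_i frob U (F i).
Proof.
apply: (big_ind2 (fun a b => frob U a = b)); first exact: frob0r.
  by move=> x1 x2 y1 y2 <- <-; rewrite frobDr.
by [].
Qed.

Lemma frob_suml k l (I : finType) (U : 'M[R]_(k, l)) (F : I -> 'M[R]_(k, l)) :
  frob (\sum_i F i) U = \sum_i frob (F i) U.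
Proof. by rewrite frobC frob_sumr; apply: eq_bigr => i _; rewrite frobC. Qed.

Lemma frobE k l (U V : 'M[R]_(k, l)) : frob U V = \sum_j \sum_i U i j * V i j.
Proof.
rewrite /frob /mxtrace; apply: eq_bigr => j _; rewrite mxE.
by apply: eq_bigr => i _; rewrite mxE.
Qed.

Lemma frob_ge0 k l (U : 'M[R]_(k, l)) : 0 <= frob U U.
Proof. by rewrite frobE; apply: sumr_ge0 => j _; apply: sumr_ge0 => i _; exact: mulr_ge0_le0 || rewrite -expr2 sqr_ge0. Qed.

Lemma frob_eq0 k l (U : 'M[R]_(k, l)) : frob U U = 0 -> U = 0.
Proof.
rewrite frobE => /eqP; rewrite psumr_eq0; last first.
  by move=> j _; apply: sumr_ge0 => i _; rewrite -expr2 sqr_ge0.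
move=> /allP H; apply/matrixP => i j; rewrite mxE.
have := H j (mem_index_enum _); rewrite psumr_eq0; last first.
  by move=> i' _; rewrite -expr2 sqr_ge0.
by move=> /allP /(_ i (mem_index_enum _)) /eqP; rewrite -expr2 => /eqP; rewrite sqrf_eq0 => /eqP.
Qed.

Lemma frob_CS k l (U V : 'M[R]_(k, l)) : frob U V ^+ 2 <= frob U U * frob V V.
Proof.
apply: disc; first exact: frob_ge0.
move=> t; have := frob_ge0 (U + t *: V).
rewrite !(frobDl, frobDr, frobZl, frobZr) (frobC V U).
by congr (_ <= _); ring.
Qed.

Lemma frob_le k l (U V : 'M[R]_(k, l)) : frob U V <= fnorm U * fnorm V.
Proof.
rewrite /fnorm -sqrtrM ?frob_ge0 //.
apply: le_trans (ler_norm _) _; rewrite -sqrtr_sqr.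
by apply: ler_wsqrtr; apply: frob_CS.
Qed.

End Basics.
Section BQ.
Variable R : realType.

Definition bq n k (X : 'M[R]_n) (U V : 'M[R]_(n, k)) := \tr (U^T *m X *m V).

Lemma tr11M (P Q : 'M[R]_1) : \tr (P *m Q) = \tr P * \tr Q.
Proof. by rewrite /mxtrace !big_ord1 !mxE big_ord1. Qed.

Lemma tr11T (P : 'M[R]_1) : \tr P^T = \tr P.
Proof. exact: mxtrace_tr. Qed.

Lemma bqC n k (X : 'M[R]_n) (U V : 'M[R]_(n, k)) : symmat X -> bq X U V = bq X V U.
Proof. by move=> hX; rewrite /bq -mxtrace_tr !trmx_mul trmxK hX mulmxA. Qed.

Lemma bqDr n k (X : 'M[R]_n) (U V W : 'M[R]_(n, k)) : bq X U (V + W) = bq X U V + bq X U W.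
Proof. by rewrite /bq mulmxDr mxtraceD. Qed.
Lemma bqZr n k (X : 'M[R]_n) (U V : 'M[R]_(n, k)) a : bq X U (a *: V) = a * bq X U V.
Proof. by rewrite /bq -scalemxAr mxtraceZ. Qed.
Lemma bqDl n k (X : 'M[R]_n) (U V W : 'M[R]_(n, k)) : bq X (V + W) U = bq X V U + bq X W U.
Proof. by rewrite /bq linearD /= !mulmxDl mxtraceD. Qed.
Lemma bqZl n k (X : 'M[R]_n) (U V : 'M[R]_(n, k)) a : bq X (a *: V) U = a * bq X V U.
Proof. by rewrite /bq linearZ /= -!scalemxAl mxtraceZ. Qed.
Lemma bqDm n k (X Y : 'M[R]_n) (U V : 'M[R]_(n, k)) : bq (X + Y) U V = bq X U V + bq Y U V.
Proof. by rewrite /bq mulmxDr mulmxDl mxtraceD. Qed.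
Lemma bqZm n k (X : 'M[R]_n) (U V : 'M[R]_(n, k)) a : bq (a *: X) U V = a * bq X U V.
Proof. by rewrite /bq -scalemxAr -scalemxAl mxtraceZ. Qed.
Lemma bqNm n k (X : 'M[R]_n) (U V : 'M[R]_(n, k)) : bq (- X) U V = - bq X U V.
Proof. by rewrite -scaleN1r bqZm mulN1r. Qed.

Lemma bq_entry n (X : 'M[R]_n) i j : bq X (delta_mx i 0 : 'cV[R]_n) (delta_mx j 0) = X i j.
Proof.
rewrite /bq trmx_delta -rowE -colE /mxtrace big_ord1 !mxE //.
Qed.

Lemma bq_diag n k (X : 'M[R]_n) (U : 'M[R]_(n, k)) j :
  (U^T *m X *m U) j j = bq X (col j U) (col j U).
Proof.
rewrite /bq /mxtrace big_ord1 !mxE; apply: eq_bigr => q _; rewrite !mxE.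
by congr (_ * _); apply: eq_bigr => r _; rewrite !mxE.
Qed.

Lemma bq_ge0 n k (X : 'M[R]_n) (U : 'M[R]_(n, k)) : psd X -> 0 <= bq X U U.
Proof.
move=> [_ hX]; rewrite {1}/bq /mxtrace; apply: sumr_ge0 => j _.
by rewrite bq_diag; apply: hX.
Qed.

Lemma bq_CS n k (X : 'M[R]_n) (U V : 'M[R]_(n, k)) : psd X ->
  bq X U V ^+ 2 <= bq X U U * bq X V V.
Proof.
move=> hX; apply: disc; first exact: bq_ge0.
move=> t; have := bq_ge0 (U + t *: V) hX.
rewrite !(bqDl, bqDr, bqZl, bqZr) (bqC V U hX.1).
by congr (_ <= _); ring.
Qed.

Lemma psd_entry n (X : 'M[R]_n) i j : psd X -> X i j ^+ 2 <= X i i * X j j.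
Proof. by move=> hX; rewrite -!bq_entry; apply: bq_CS. Qed.

Lemma psd_diag0 n (X : 'M[R]_n) : psd X -> (forall j, X j j = 0) -> X = 0.
Proof.
move=> hX h0; apply/matrixP => i j; rewrite mxE.
have := psd_entry i j hX; rewrite !h0 mul0r.
by move=> h; apply/eqP; rewrite -sqrf_eq0 eq_le h sqr_ge0.
Qed.

Lemma tr_psd_aux n (M : 'M[R]_n) : (forall v : 'cV[R]_n, 0 <= bq M v v) ->
  forall c (X : 'M[R]_n), (#|[set j | X j j != 0%R]| <= c)%N -> psd X ->
  0 <= \tr (M *m X).
Proof.
move=> hM c; elim: c => [|c IH] X hc hX.
  have : [set j | X j j != 0] = finset.set0 by apply/eqP; rewrite -cards_eq0; move: hc; rewrite leqn0.
  move=> h0; rewrite (psd_diag0 hX) ?mulmx0 ?linear0 //.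
  move=> j; apply/eqP; apply: contraT => hj.
  have : j \in [set j | X j j != 0] by rewrite inE.
  by rewrite h0 inE.
have [/eqP h0|/set0Pn [i]] := boolP ([set j | X j j != 0] == finset.set0).
  rewrite (psd_diag0 hX) ?mulmx0 ?linear0 //.
  move=> j; apply/eqP; apply: contraT => hj.
  have : j \in [set j | X j j != 0] by rewrite inE.
  by rewrite h0 inE.
rewrite inE => hi.
have a0 : 0 < X i i.
  by rewrite lt_neqAle eq_sym hi /= -bq_entry; apply: bq_ge0.
set a := X i i in a0 hi *.
set cc := col i X.
set X' := X - a^-1 *: (cc *m cc^T).
have hsym : symmat X'.
  by rewrite /symmat /X' linearB /= linearZ /= trmx_mul trmxK hX.1.
have hbq : forall v : 'cV[R]_n, bq (cc *m cc^T) v v = bq X (delta_mx i 0 : 'cV[R]_n) v ^+ 2.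
  move=> v; rewrite /bq mulmxA -mulmxA tr11M expr2; congr (_ * _).
    by rewrite -tr11T trmx_mul trmxK /cc colE trmx_mul hX.1.
  by rewrite /cc colE trmx_mul hX.1.
have hX' : psd X'.
  split => // v; rewrite -/(bq X' v v) /X' bqDm bqNm bqZm hbq.
  rewrite subr_ge0 ler_pdivrMl // mulrC.
  have := bq_CS (delta_mx i 0 : 'cV[R]_n) v hX; rewrite bq_entry.
  by move=> h; rewrite mulrC; exact: h.
have hdiag : forall j, X' j j = X j j - a^-1 * (X j i * X j i).
  by move=> j; rewrite /X' !mxE big_ord1 !mxE.
have hsub : [set j | X' j j != 0] \subset [set j | X j j != 0] :\ i.
  apply/fintype.subsetP => j; rewrite !inE hdiag.
  have [->|hji] := eqVneq j i.
    by rewrite -/a mulKf // subrr eqxx.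
  rewrite /=; apply: contra => /eqP hjj; rewrite hjj.
  have := psd_entry j i hX; rewrite hjj mul0r => h.
  have /eqP -> : X j i == 0 by rewrite -sqrf_eq0 eq_le h sqr_ge0.
  by rewrite mulr0 mulr0 subrr.
have hc' : (#|[set j | X' j j != 0%R]| <= c)%N.
  move: hc; rewrite (cardsD1 i) inE hi add1n ltnS => hc.
  exact: leq_trans (subset_leq_card hsub) hc.
have eX : \tr (M *m X) = \tr (M *m X') + a^-1 * \tr (M *m (cc *m cc^T)).
  rewrite /X' mulmxDr mxtraceD mulmxN linearN /= -scalemxAr mxtraceZ.
  by rewrite addrNK.
rewrite eX; apply: addr_ge0; first exact: IH X' hc' hX'.
apply: mulr_ge0; first by rewrite invr_ge0 ltW.
by rewrite mulmxA mxtrace_mulC mulmxA; apply: hM.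
Qed.

Lemma tr_psd n (M X : 'M[R]_n) : (forall v : 'cV[R]_n, 0 <= bq M v v) -> psd X ->
  0 <= \tr (M *m X).
Proof. by move=> hM hX; apply: (tr_psd_aux hM (leqnn _) hX). Qed.

End BQ.
Section Proj.
Variable R : realType.

Definition oext K (a : R) (g : 'I_K -> R) : 'I_K.+1 -> R :=
  fun i => if unlift ord0 i is Some j then g j else a.

Lemma oext_sum k l K (a : R) (g : 'I_K -> R) (f : 'I_K.+1 -> 'M[R]_(k, l)) :
  \sum_i oext a g i *: f i = a *: f ord0 + \sum_j g j *: f (lift ord0 j).
Proof.
rewrite big_ord_recl /oext unlift_none; congr (_ + _).
by apply: eq_bigr => j _; rewrite liftK.
Qed.

Lemma frob_lin k l K (c : 'I_K -> R) (f : 'I_K -> 'M[R]_(k, l)) W :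
  frob (\sum_i c i *: f i) W = \sum_i c i * frob (f i) W.
Proof. by rewrite frob_suml; apply: eq_bigr => i _; rewrite frobZl. Qed.

Lemma proj_ex k l K (f : 'I_K -> 'M[R]_(k, l)) (Z : 'M[R]_(k, l)) :
  exists W, (forall i, frob (f i) W = 0) /\
    exists c : 'I_K -> R, Z - W = \sum_i c i *: f i.
Proof.
elim: K f Z => [|K IH] f Z.
  exists Z; split; first by case.
  by exists (fun _ => 0); rewrite subrr big_ord0.
set f' := fun j : 'I_K => f (lift ord0 j).
set v := f ord0.
have [W0 [h0 [c0 e0]]] := IH f' Z.
have [W1 [h1 [d e1]]] := IH f' v.
have ev : v = W1 + \sum_j d j *: f' j by rewrite -e1 addrC subrK.
have [hW1|hW1] := eqVneq (frob W1 W1) 0.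
  have W10 := frob_eq0 hW1.
  exists W0; split.
    move=> i; case: (unliftP ord0 i) => [j ->|->]; first exact: h0.
    rewrite -/v ev W10 add0r frob_lin big1 // => j _.
    by rewrite h0 mulr0.
  by exists (oext 0 c0); rewrite oext_sum scale0r add0r e0.
set al := frob W1 W0 / frob W1 W1.
exists (W0 - al *: W1); split.
  move=> i; case: (unliftP ord0 i) => [j ->|->].
    by rewrite frobBr frobZr -/(f' j) h0 h1 mulr0 subr0.
  rewrite -/v ev frobDl frob_lin big1; last first.
    by move=> j _; rewrite frobBr frobZr h0 h1 mulr0 subr0 mulr0.
  rewrite addr0 frobBr frobZr /al divfK // subrr //.
exists (oext al (fun j => c0 j - al * d j)); rewrite oext_sum.
rewrite -/v ev.
have -> : Z - (W0 - al *: W1) = (Z - W0) + al *: W1 by rewrite opprD opprK addrA.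
rewrite e0 scalerDr.
have -> : \sum_j (c0 j - al * d j) *: f (lift ord0 j) =
          \sum_j c0 j *: f' j - al *: \sum_j d j *: f' j.
  rewrite scaler_sumr -sumrB; apply: eq_bigr => j _.
  by rewrite scalerBl scalerA.
by rewrite addrACA subrr addr0 addrC.
Qed.

End Proj.
Section Main.
Variable R : realType.
Variables (n m : nat) (A : 'I_m -> 'M[R]_n) (C : 'M[R]_n).
Hypothesis hA : forall i, symmat (A i).
Hypothesis hC : symmat C.

Lemma PY_prop p (Y Z Yd : 'M[R]_(n, p)) : TY A Y Yd -> frob Yd (PY A Y Z) = frob Yd Z.
Proof.
move=> hT.
have [W [hW [c ec]]] := proj_ex (fun i => A i *m Y) Z.
have ex : exists W, TY A Y W /\ forall V, TY A Y V -> frob (Z - W) V = 0.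
  exists W; split; first by move=> i; rewrite hW.
  move=> V hV; rewrite ec frob_lin big1 // => i _.
  by rewrite hV mulr0.
have [h1 h2] := xgetPex 0 ex.
rewrite /PY; set P := xget _ _ in h1 h2 *.
have := h2 Yd hT; rewrite frobBl => /eqP; rewrite subr_eq0 => /eqP.
by rewrite (frobC Z) (frobC P).
Qed.

Lemma ker_vec (Y : 'M[R]_(n, n.+1)) : exists z : 'cV[R]_(n.+1), z != 0 /\ Y *m z = 0.
Proof.
have hk : kermx Y^T != 0.
  apply/negP => /eqP h.
  have := mxrank_ker Y^T; rewrite h mxrank0 => /esym/eqP.
  rewrite subn_eq0 => h2.
  have := leq_trans h2 (rank_leq_col Y^T).
  by rewrite ltnn.
have [w hw wn0] := rowV0Pn hk.
exists w^T; split; first by rewrite trmx_eq0.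
by have /sub_kermxP h := hw; rewrite -[Y]trmxK -trmx_mul h trmx0.
Qed.

Lemma frob_rank1 (M : 'M[R]_n) (x : 'cV[R]_n) k (z : 'cV[R]_k) :
  frob (x *m z^T) (M *m (x *m z^T)) = bq M x x * frob z z.
Proof.
rewrite /frob /bq trmx_mul trmxK -(mulmxA z) (mxtrace_mulC z) !mulmxA.
by rewrite -(mulmxA (x^T *m M *m x)) tr11M.
Qed.

Lemma hess_cons (Y : 'M[R]_(n, n.+1)) epsH : hess_ge A C Y epsH ->
  forall x : 'cV[R]_n, 0 <= bq (2%:R *: Smat A C Y + epsH *: 1%:M) x x.
Proof.
move=> hH x.
have [z [zn0 Yz]] := ker_vec Y.
have hT : TY A Y (x *m z^T).
  move=> i; rewrite /frob mulmxA mxtrace_mulC !mulmxA trmx_mul mulmxA.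
  by rewrite -trmx_mul Yz trmx0 !mul0mx linear0.
have := hH _ hT.
rewrite /rhess frobZr PY_prop // frob_rank1 /fnorm sqr_sqrtr ?frob_ge0 //.
rewrite -{2}[x *m z^T]mul1mx frob_rank1.
have fz : 0 < frob z z.
  rewrite lt_neqAle frob_ge0 andbT eq_sym; apply/negP => /eqP h.
  by move: zn0; rewrite (frob_eq0 h) eqxx.
rewrite (bqDm (2%:R *: Smat A C Y)) !bqZm => h.
have : 0 <= (2%:R * bq (Smat A C Y) x x + epsH * bq 1%:M x x) * frob z z.
  rewrite mulrDl -!mulrA.
  move: h; set u := bq 1%:M x x * frob z z; set w := bq (Smat A C Y) x x * frob z z.
  by move=> h; lra.
by rewrite pmulr_lge0.
Qed.

End Main.
Section MP.
Variable R : realType.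

Lemma unit_BBt k l (B : 'M[R]_(k, l)) : row_free B -> B *m B^T \in unitmx.
Proof.
move=> hB; rewrite -row_free_unit -kermx_eq0; apply: contraT => h.
have [w hw wn0] := rowV0Pn h.
have /sub_kermxP hw0 := hw.
have h1 : frob (w *m B)^T (w *m B)^T = 0.
  by rewrite /frob trmxK trmx_mul mulmxA -(mulmxA w) hw0 mul0mx linear0.
have := frob_eq0 h1 => /eqP; rewrite trmx_eq0 (mulmx_free_eq0 _ hB).
by rewrite (negbTE wn0).
Qed.

Lemma mp_core k r (G : 'M[R]_k) (B : 'M[R]_(r, k)) (L : 'M[R]_(k, r)) :
  G^T = G -> row_free B -> G = L *m B -> (r <= \rank G)%N ->
  exists P, is_mp_pinv G P.
Proof.
move=> hG hBf hGL hr.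
have [N eN] := ex_intro (fun N => N = B *m B^T) _ erefl.
have hN : N \in unitmx by rewrite eN; exact: unit_BBt.
have [Ni eNi] := ex_intro (fun M => M = invmx N) _ erefl.
have hNT : N^T = N by rewrite eN trmx_mul trmxK.
have hNiT : Ni^T = Ni by rewrite eNi trmx_inv hNT.
have NNi : N *m Ni = 1%:M by rewrite eNi mulmxV.
have NiN : Ni *m N = 1%:M by rewrite eNi mulVmx.
have [Pi ePi] := ex_intro (fun M => M = B^T *m Ni *m B) _ erefl.
have hGPi : G *m Pi = G.
  rewrite {1}hGL ePi !mulmxA -(mulmxA L B (B^T)) -eN -(mulmxA L N Ni).
  by rewrite NNi mulmx1 -hGL.
have hPiT : Pi^T = Pi by rewrite ePi !trmx_mul trmxK hNiT mulmxA.
have hPiG : Pi *m G = G by rewrite -hPiT -{1}hG -trmx_mul hGPi hG.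
have [H eH] := ex_intro (fun M => M = B *m G *m B^T) _ erefl.
have hGH : G = B^T *m Ni *m H *m Ni *m B.
  have e : G = Pi *m G *m Pi by rewrite hPiG hGPi.
  by rewrite {1}e ePi eH !mulmxA.
have hHu : H \in unitmx.
  rewrite -row_full_unit /row_full eqn_leq rank_leq_row /=.
  apply: leq_trans hr _.
  rewrite {1}hGH.
  apply: leq_trans (mxrankM_maxl _ _) _.
  apply: leq_trans (mxrankM_maxl _ _) _.
  exact: mxrankM_maxr.
have [Hi eHi] := ex_intro (fun M => M = invmx H) _ erefl.
have HHi : H *m Hi = 1%:M by rewrite eHi mulmxV.
have [P eP] := ex_intro (fun M => M = B^T *m Hi *m B) _ erefl.
have hHT : H^T = H by rewrite eH !trmx_mul trmxK hG mulmxA.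
have hHiT : Hi^T = Hi by rewrite eHi trmx_inv hHT.
have hPT : P^T = P by rewrite eP !trmx_mul trmxK hHiT mulmxA.
have hGBt : G *m B^T = B^T *m Ni *m H.
  rewrite {1}hGH -(mulmxA (B^T *m Ni *m H *m Ni) B (B^T)) -eN.
  by rewrite -(mulmxA (B^T *m Ni *m H) Ni N) NiN mulmx1.
have hGP : G *m P = Pi.
  rewrite eP !mulmxA hGBt -(mulmxA (B^T *m Ni) H Hi) HHi mulmx1.
  by rewrite ePi.
have hPG : P *m G = Pi by rewrite -hPT -{1}hG -trmx_mul hGP hPiT.
exists P; split; first by rewrite hGP hPiG.
split.
  rewrite hPG ePi eP !mulmxA -(mulmxA (B^T *m Ni) B (B^T)) -eN.
  by rewrite -(mulmxA (B^T) Ni N) NiN mulmx1.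
by split; rewrite ?hGP ?hPG hPiT.
Qed.

Lemma mp_exists k (G : 'M[R]_k) : G^T = G -> exists P, is_mp_pinv G P.
Proof.
move=> hG; apply: (@mp_core k (\rank G) G (row_base G) (G *m pinvmx (row_base G))) => //.
- exact: row_base_free.
- by rewrite mulmxKpV // eq_row_base submx_refl.
Qed.

End MP.
Section Mu.
Variable R : realType.
Variables (n m : nat) (A : 'I_m -> 'M[R]_n) (C : 'M[R]_n).

Lemma frob_mulr k l q (X : 'M[R]_(k, l)) (Y : 'M[R]_(l, q)) (V : 'M[R]_(k, q)) :
  frob (X *m Y) V = frob X (V *m Y^T).
Proof. by rewrite /frob trmx_mul -mulmxA mxtrace_mulC mulmxA. Qed.

Lemma Gram_sym p (Y : 'M[R]_(n, p)) : (Gram A Y)^T = Gram A Y.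
Proof. by apply/matrixP => i j; rewrite !mxE frobC. Qed.

Lemma Aadj_mul p (nu : 'I_m -> R) (Y : 'M[R]_(n, p)) :
  Aadj A nu *m Y = \sum_j nu j *: (A j *m Y).
Proof. by rewrite /Aadj mulmx_suml; apply: eq_bigr => j _; rewrite scalemxAl. Qed.

Lemma mu_orth p (Y : 'M[R]_(n, p)) i : frob (A i *m Y) (Smat A C Y *m Y) = 0.
Proof.
have [P0 hP0] := mp_exists (Gram_sym Y).
have := @xgetPex _ 0 (fun Q => is_mp_pinv (Gram A Y) Q) (ex_intro _ P0 hP0).
rewrite -/(mp_pinv (Gram A Y)) => -[h1 _].
have [W [hW [c ec]]] := proj_ex (fun i => A i *m Y) (C *m Y).
set cv : 'cV[R]_m := \col_j c j.
have ha : \col_i Aop A (C *m Y *m Y^T) i = Gram A Y *m cv.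
  apply/matrixP => i' j; rewrite !mxE /Aop -frob_mulr.
  have -> : C *m Y = (C *m Y - W) + W by rewrite subrK.
  rewrite ec frobDr frob_sumr hW addr0; apply: eq_bigr => j' _.
  by rewrite !mxE frobZr mulrC.
have hmu : Gram A Y *m mu A C Y = \col_i Aop A (C *m Y *m Y^T) i.
  by rewrite /mu ha !mulmxA h1.
rewrite /Smat mulmxBl frobBr Aadj_mul frob_sumr.
apply/eqP; rewrite subr_eq0; apply/eqP.
have := congr1 (fun M : 'cV[R]_m => M i 0) hmu; rewrite /= !mxE /Aop -frob_mulr => <-.
by apply: eq_bigr => j _; rewrite frobZr !mxE mulrC.
Qed.

End Mu.
Section Fin.
Variable R : realType.
Variables (n m : nat) (A : 'I_m -> 'M[R]_n) (b : 'I_m -> R) (C : 'M[R]_n).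
Hypothesis hA : forall i, symmat (A i).
Hypothesis hC : symmat C.

Lemma frobT k l (U V : 'M[R]_(k, l)) : frob U^T V^T = frob U V.
Proof. by rewrite /frob trmxK mxtrace_mulC -/(frob V U) frobC. Qed.

Lemma Smat_sym p (Y : 'M[R]_(n, p)) : symmat (Smat A C Y).
Proof.
rewrite /symmat /Smat /Aadj linearB /= hC linear_sum /=; congr (_ - _).
by apply: eq_bigr => j _; rewrite linearZ /= hA.
Qed.

Lemma frobS_feas p (Y : 'M[R]_(n, p)) X : (forall i, Aop A X i = b i) ->
  frob (Smat A C Y) X = frob C X - \sum_i mu A C Y i 0 * b i.
Proof.
move=> hX; rewrite /Smat frobBl /Aadj frob_suml; congr (_ - _).
by apply: eq_bigr => i _; rewrite frobZl -hX.
Qed.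

Lemma pd_psd k (X : 'M[R]_k) : pd X -> psd X.
Proof.
move=> [hs hp]; split => // v.
have [->|vn0] := eqVneq v 0; first by rewrite mulmx0 linear0.
exact: ltW (hp v vn0).
Qed.

Lemma pd_unit k (X : 'M[R]_k) : pd X -> X \in unitmx.
Proof.
move=> [hs hp]; rewrite -row_free_unit -kermx_eq0; apply: contraT => h.
have [w hw wn0] := rowV0Pn h.
have /sub_kermxP hw0 := hw.
have := hp w^T; rewrite trmx_eq0 => /(_ wn0).
by rewrite trmxK hw0 mul0mx linear0 ltxx.
Qed.

Lemma dominate k q (X0 : 'M[R]_k) (F : 'M[R]_(k, q)) : pd X0 ->
  exists c, 0 <= c /\ forall v : 'cV[R]_k, bq (F *m F^T) v v <= c * bq X0 v v.
Proof.
move=> hpd; have hpsd := pd_psd hpd; have hu := pd_unit hpd.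
set W := invmx X0 *m F.
have hW : X0 *m W = F by rewrite /W mulKVmx.
exists (bq X0 W W); split; first exact: bq_ge0.
move=> v; set U := F^T *m v.
have e1 : bq (F *m F^T) v v = frob U U.
  by rewrite /bq /frob /U trmx_mul trmxK !mulmxA.
have e2 : bq X0 (v *m U^T) W = frob U U.
  rewrite /bq trmx_mul trmxK -!mulmxA hW /frob /U trmx_mul trmxK.
  by rewrite (mulmxA F^T v) (mxtrace_mulC (F^T *m v)).
have e3 : bq X0 (v *m U^T) (v *m U^T) = bq X0 v v * frob U U.
  by rewrite -frob_rank1 /bq /frob -(mulmxA (v *m U^T)^T).
have := bq_CS (v *m U^T) W hpsd; rewrite e2 e3 e1.
have [h0|hpos] := eqVneq (frob U U) 0.
  by rewrite h0 => _; apply: mulr_ge0; apply: bq_ge0.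
have fpos : 0 < frob U U by rewrite lt_neqAle eq_sym hpos frob_ge0.
move=> h; rewrite -(ler_pM2r fpos) -expr2.
have -> : bq X0 W W * bq X0 v v * frob U U = bq X0 v v * frob U U * bq X0 W W by ring.
exact: h.
Qed.

End Fin.
Section Fin2.
Variable R : realType.
Variables (n m : nat) (A : 'I_m -> 'M[R]_n) (b : 'I_m -> R) (C : 'M[R]_n).
Hypothesis hA : forall i, symmat (A i).
Hypothesis hC : symmat C.

Lemma bqT k (M : 'M[R]_k) (v : 'cV[R]_k) : bq M^T v v = bq M v v.
Proof. by rewrite /bq -mxtrace_tr !trmx_mul !trmxK mulmxA. Qed.

Lemma frob_sym_tr k (S X : 'M[R]_k) : symmat S -> frob S X = \tr (S *m X).
Proof. by move=> hS; rewrite /frob hS. Qed.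

Lemma trace_zero p (Y : 'M[R]_(n, p)) :
  (forall X1 X2, feas A b X1 -> feas A b X2 -> \tr X1 = \tr X2) ->
  (exists2 X, feas A b X & pd X) ->
  frob (Smat A C Y) (Y *m Y^T) = 0.
Proof.
move=> htr [X0 hX0 hpd].
have [hs0 [ha0 hp0]] := hX0.
set S := Smat A C Y.
have hS : symmat S := Smat_sym hA hC Y.
set Z := Y *m Y^T.
have hZT : Z^T = Z by rewrite /Z trmx_mul trmxK.
set H := S *m Z + Z *m S.
have hHT : H^T = H.
  by rewrite /H linearD /= (trmx_mul S Z) (trmx_mul Z S) hS hZT addrC.
have hSZ : forall i, frob (A i) (S *m Z) = 0.
  by move=> i; rewrite /Z mulmxA -frob_mulr; apply: mu_orth.
have hAH : forall i, frob (A i) H = 0.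
  move=> i; rewrite /H frobDr hSZ add0r -frobT hA trmx_mul hS hZT.
  exact: hSZ.
have [c1 [c10 hc1]] := dominate (S *m Y) hpd.
have [c2 [c20 hc2]] := dominate Y hpd.
set t := (1 + c1 + c2)^-1.
have tpos : 0 < t.
  by rewrite /t invr_gt0; apply: (lt_le_trans ltr01); rewrite -addrA lerDl addr_ge0.
have tc : t * (c1 + c2) <= 1.
  have h1 : 0 < 1 + c1 + c2 by apply: (lt_le_trans ltr01); rewrite -addrA lerDl addr_ge0.
  by rewrite /t mulrC ler_pdivrMr // mul1r -addrA lerDr.
have hq0 : forall v : 'cV[R]_n, 0 <= bq X0 v v by move=> v; have := pd_psd hpd; apply: bq_ge0.
set Xt := X0 + t *: H.
have hXt : feas A b Xt.
  split.
    by rewrite /symmat /Xt linearD /= linearZ /= hHT hs0.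
  split.
    by move=> i; rewrite /Aop /Xt frobDr frobZr hAH mulr0 addr0; apply: ha0.
  split.
    by rewrite /symmat /Xt linearD /= linearZ /= hHT hs0.
  move=> v; rewrite -/(bq Xt v v) /Xt bqDm bqZm.
  have eH : bq H v v = 2%:R * frob (Y^T *m (S *m v)) (Y^T *m v).
    rewrite /H; have -> : Z *m S = (S *m Z)^T by rewrite trmx_mul hS hZT.
    rewrite bqDm bqT.
    have -> : bq (S *m Z) v v = frob (Y^T *m (S *m v)) (Y^T *m v).
      by rewrite /bq /frob !trmx_mul !trmxK hS /Z !mulmxA.
    by rewrite mulr_natl mulr2n.
  have e1 : frob (Y^T *m (S *m v)) (Y^T *m (S *m v)) = bq ((S *m Y) *m (S *m Y)^T) v v.
    by rewrite /bq /frob !trmx_mul trmxK hS !mulmxA.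
  have e2 : frob (Y^T *m v) (Y^T *m v) = bq (Y *m Y^T) v v.
    by rewrite /bq /frob !trmx_mul trmxK !mulmxA.
  have hsum := frob_ge0 (Y^T *m (S *m v) + Y^T *m v).
  rewrite !(frobDl, frobDr) e1 e2 (frobC (Y^T *m v)) in hsum.
  have := hc1 v; have := hc2 v; have := hq0 v.
  rewrite eH.
  set q := bq X0 v v; set a := bq _ v v; set a2 := bq (Y *m Y^T) v v.
  set f := frob _ _ in hsum *.
  move=> hq h2 h1.
  have : t * (2%:R * f) >= - (t * ((c1 + c2) * q)) by rewrite -mulrN ler_pM2l //; lra.
  have : t * ((c1 + c2) * q) <= q by rewrite mulrA; apply: ler_piMl => //; rewrite mulr_ge0 //; lra.
  move=> h3 h4; apply: le_trans (_ : 0 <= q - t * ((c1 + c2) * q)) _; first by rewrite subr_ge0.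
  by rewrite lerD2l.
have := htr _ _ hXt hX0; rewrite /Xt mxtraceD mxtraceZ => /eqP.
rewrite -subr_eq0 addrC addKr mulf_eq0 gt_eqF //= /H mxtraceD mxtrace_mulC -mulr2n.
rewrite -mulr_natl mulf_eq0 pnatr_eq0 /= => /eqP h.
by rewrite (frob_sym_tr _ hS) mxtrace_mulC h.
Qed.

End Fin2.

Unset Implicit Arguments.
Local Open Scope classical_set_scope.

Theorem corollary3 (R : realType) (n m : nat) (A : 'I_m -> 'M[R]_n)
  (b : 'I_m -> R) (C : 'M[R]_n)
  (hA : forall i, symmat (A i)) (hC : symmat C)
  (hne : exists X, feas A b X)
  (hcpt : compact (feas A b))
  (hass : assumption1 A b n.+1)
  (Rt : R) (hRt : (exists2 X, feas A b X & \tr X = Rt) /\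
                  (forall X, feas A b X -> \tr X <= Rt))
  (fstar : R) (hf : (exists2 X, feas A b X & frob C X = fstar) /\
                    (forall X, feas A b X -> fstar <= frob C X))
  (epsg epsH : R) (hepsg : 0 <= epsg) (hepsH : 0 <= epsH)
  (Y : 'M[R]_(n, n.+1)) (hY : Mp A b Y)
  (hgrad : fnorm (rgrad A C Y) <= epsg)
  (hhess : hess_ge A C Y epsH) :
  (0 <= 2%:R * (g C Y - fstar) <= epsg * Num.sqrt Rt + epsH * Rt)
  /\ ((forall X1 X2, feas A b X1 -> feas A b X2 -> \tr X1 = \tr X2) ->
      (exists2 X, feas A b X & pd X) ->
      0 <= 2%:R * (g C Y - fstar) <= epsH * Rt).
Proof.
set S := Smat A C Y.
have hS : symmat S := Smat_sym hA hC Y.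
set Z := Y *m Y^T.
have hZT : Z^T = Z by rewrite /Z trmx_mul trmxK.
have hZ : feas A b Z.
  split; first exact: hZT.
  split; first exact: hY.
  split; first exact: hZT.
  move=> v; have := frob_ge0 (Y^T *m v); rewrite /frob trmx_mul trmxK /Z !mulmxA.
  by [].
have gZ : g C Y = frob C Z by rewrite /g frob_mulr.
have [[Xs hXs eXs] hfmin] := hf.
have [hXs1 [hXs2 hXs3]] := hXs.
have hlow : fstar <= g C Y by rewrite gZ; apply: hfmin.
have hkey : g C Y - fstar = frob S Z - frob S Xs.
  by rewrite /S (frobS_feas C Y hY) (frobS_feas C Y hXs2) gZ eXs opprB addrA subrK.
have hXsR : \tr Xs <= Rt := hRt.2 Xs hXs.
have hZR : \tr Z <= Rt := hRt.2 Z hZ.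
have hH : - (2%:R * frob S Xs) <= epsH * \tr Xs.
  have := tr_psd (hess_cons hhess) hXs3.
  rewrite mulmxDl mxtraceD -!scalemxAl !mxtraceZ mul1mx -/S (frob_sym_tr _ hS).
  by move=> h; rewrite -subr_ge0 opprK addrC.
have hH2 : - (2%:R * frob S Xs) <= epsH * Rt.
  by apply: le_trans hH _; apply: ler_wpM2l.
have hlow2 : 0 <= 2%:R * (g C Y - fstar) by rewrite mulr_ge0 // subr_ge0.
split.
  rewrite hlow2 /= hkey mulrBr.
  apply: lerD => //.
  have e : 2%:R * frob S Z = frob (rgrad A C Y) Y.
    by rewrite /rgrad frobZl -frob_mulr.
  rewrite e; apply: le_trans (frob_le _ _) _.
  apply: ler_pM => //; first by rewrite /fnorm sqrtr_ge0.
    by rewrite /fnorm sqrtr_ge0.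
  rewrite /fnorm; apply: ler_wsqrtr.
  by rewrite /frob mxtrace_mulC.
move=> htr hpd.
have h0 : frob S Z = 0 := trace_zero hA hC Y htr hpd.
rewrite hlow2 /= hkey h0 sub0r mulrN.
exact: hH2.
Qed.
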